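(* Let $r\ge1$, $n$ be integers and let $\sigma,\sigma':\mathbb{Z}_n\to\{0,1\}$ satisfy $\mathrm{maj}_r(\sigma)=\sigma'$. For every block $[i,j]\in B(\sigma')$, the number of blocks in the block interval $[f^{\leftarrow}_{\sigma,\sigma'}([i,j]),f^{\rightarrow}_{\sigma,\sigma'}([i,j])]_{B(\sigma)}$ is odd.
   Context: Cells are elements of $\mathbb{Z}_n$, arithmetic mod $n$; $[a,b]$ denotes the cyclic interval $a,\dots,b$. The majority rule with radius $r$: $\mathrm{maj}_r(\sigma)(i)=0$ if among the cells of $[i-r,i+r]$ strictly more have value $0$ than $1$ under $\sigma$, and $=1$ otherwise. For $\beta\in\{0,1\}$, $B^\beta(\sigma)$ is the set of cell intervals $[i,j]$ with $\sigma(k)=\beta$ for all $k\in[i,j]$ and $\sigma(i-1)=\sigma(j+1)=1-\beta$ (maximal homogeneous blocks); $B(\sigma)=B^0(\sigma)\cup B^1(\sigma)$. For $[i,j]\in B(\sigma')$: the left mapping $f^{\leftarrow}_{\sigma,\sigma'}([i,j])$ is the block of $B(\sigma)$ containing cell $j-r$, and the right mapping $f^{\rightarrow}_{\sigma,\sigma'}([i,j])$ is the block of $B(\sigma)$ containing cell $i+r$. For blocks $X=[x,y]$, $X'=[x',y']$ and a set of blocks $B$, the block interval $[X,X']_B$ is the set of blocks $[i,j]\in B$ with $[i,j]\subseteq[x,y']$. *)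

(* Defs.v *)
(* Cells of Z_n are represented by the naturals c < n,
   with arithmetic modulo n.  Configurations are functions nat -> bool
   (false = value 0, true = value 1); only their values on cells c < n matter,
   since every cell index used below is reduced modulo n. *)
From mathcomp Require Import all_boot.
Set Implicit Arguments. Unset Strict Implicit. Unset Printing Implicit Defensive.

Definition cadd (n a k : nat) : nat := (a + k) %% n.
Definition csub (n a k : nat) : nat := (a + (n - k %% n)) %% n.

(* c lies in the cyclic interval [a,b] = {a, a+1, ..., b} of Z_n (a, b < n). *)
Definition in_cint (n a b c : nat) : bool :=
  (c < n) && ((c + (n - a)) %% n <= (b + (n - a)) %% n).

Definition maj (n r : nat) (sigma : nat -> bool) (i : nat) : bool :=
  let W := [seq c <- iota 0 n | in_cint n (csub n i r) (cadd n i r) c] in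
  let zeros := count (fun c => ~~ sigma c) W in
  let ones := count (fun c => sigma c) W in
  if ones < zeros then false else true.

Definition is_block_of (n : nat) (beta : bool) (sigma : nat -> bool) (i j : nat) : bool :=
  [&& i < n, j < n,
      all (fun c => in_cint n i j c ==> (sigma c == beta)) (iota 0 n),
      sigma (csub n i 1) == ~~ beta &
      sigma (cadd n j 1) == ~~ beta].

Definition is_block (n : nat) (sigma : nat -> bool) (i j : nat) : bool :=
  is_block_of n false sigma i j || is_block_of n true sigma i j.

Definition cint_sub (n a b x y : nat) : bool :=
  all (fun c => in_cint n a b c ==> in_cint n x y c) (iota 0 n).

Definition is_left_image (n r : nat) (sigma : nat -> bool) (i j x y : nat) : bool :=
  is_block n sigma x y && in_cint n x y (csub n j r).

Definition is_right_image (n r : nat) (sigma : nat -> bool) (i j x y : nat) : bool :=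
  is_block n sigma x y && in_cint n x y (cadd n i r).

(* number of blocks in the block interval [[x,y],[x',y']]_{B(sigma)}:
   blocks [a,b] \in B(sigma) with [a,b] \subseteq [x,y'] *)
Definition block_interval_card (n : nat) (sigma : nat -> bool) (x y' : nat) : nat :=
  \sum_(a < n) \sum_(b < n) (is_block n sigma a b && cint_sub n a b x y').

(* Main.v *)
Require Import Defs.
From mathcomp Require Import all_boot zify.
Set Implicit Arguments. Unset Strict Implicit. Unset Printing Implicit Defensive.

Lemma modn_cases m n : 0 < n -> m < 3 * n ->
  (m < n /\ m %% n = m) \/ (n <= m < 2 * n /\ m %% n = m - n) \/
  (2 * n <= m /\ m %% n = m - 2 * n).
Proof.
move=> n0 hm.
case: (ltnP m n) => h1; first by left; split => //; rewrite modn_small.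
case: (ltnP m (2*n)) => h2.
  right; left; split; first lia.
  have -> : m = (m - n) + n by lia.
  by rewrite modnDr modn_small; lia.
right; right; split => //.
have -> : m = 2 * n + (m - 2 * n) by lia.
by rewrite modnMDl modn_small; lia.
Qed.

Lemma modn_cases2 m n : 0 < n -> m < 2 * n ->
  (m < n /\ m %% n = m) \/ (n <= m /\ m %% n = m - n).
Proof.
move=> n0 hm; case: (@modn_cases m n n0 ltac:(lia)); first by left.
case=> [[h1 h2]|[h1 h2]]; [by right; split; lia | lia].
Qed.

Ltac nomod m := lazymatch m with context [_ %% _] => fail | _ => idtac end.

Ltac elim_mod n :=
  repeat match goal with
  | |- context [?m %% n] => nomod m;
      let h := fresh "h" in
      first [ case: (@modn_cases2 m n ltac:(lia) ltac:(lia)) => [[h ->]|[h ->]]; try (exfalso; lia)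
      | case: (@modn_cases m n ltac:(lia) ltac:(lia)) => [[h ->]|[[h ->]|[h ->]]];
      try (exfalso; lia) ]
  end.

Lemma win_shift0 n A B c : 0 < n -> A < n -> B < n -> c < n ->
  in_cint n (cadd n A 1) (cadd n B 1) c + (c == A)
  = in_cint n A B c + (c == cadd n B 1).
Proof.
move=> n0 An Bn cn.
rewrite /in_cint /cadd cn /=.
elim_mod n; lia.
Qed.


Definition cst (tau : nat -> bool) k t := all (fun u => tau u == tau k) (iota k (t.+1 - k)).
Definition prevn n k := if k is k'.+1 then k' else n.-1.
Definition Qc n (tau : nat -> bool) k t :=
  [&& cst tau k t, tau (prevn n k) != tau k & tau t.+1 != tau k].

Lemma cst_rec tau k t : k <= t -> cst tau k t.+1 = cst tau k t && (tau t.+1 == tau k).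
Proof.
move=> kt; rewrite /cst.
have -> : t.+2 - k = (t.+1 - k) + 1 by lia.
by rewrite iotaD all_cat /= andbT; congr (_ && (tau _ == _)); lia.
Qed.

Lemma cst_end tau k t : k <= t -> cst tau k t -> tau t = tau k.
Proof.
move=> kt /allP /(_ t); rewrite mem_iota => h; apply/eqP/h; lia.
Qed.

Lemma cst_self tau k : cst tau k k.
Proof. by rewrite /cst subSn // subnn /= eqxx. Qed.

Lemma g_one n tau t : tau n.-1 != tau 0 ->
  \sum_(k < t.+1) (cst tau k t && (tau (prevn n k) != tau k)) = 1.
Proof.
move=> h0; elim: t => [|t IH].
  by rewrite big_ord_recr big_ord0 /= cst_self h0.
rewrite big_ord_recr /= cst_self /=.
rewrite (eq_bigr (fun k : 'I_t.+1 => (tau t.+1 == tau t) * (cst tau k t && (tau (prevn n k) != tau k)))).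
  by rewrite -big_distrr /= IH eq_sym; case: (tau t == tau t.+1).
move=> [k /= kt] _; rewrite cst_rec; last lia.
case C: (cst tau k t) => /=; last by rewrite muln0.
rewrite (cst_end _ C); last lia.
by case: (_ == _); case: (_ != _).
Qed.

Lemma G_one n tau t : tau n.-1 != tau 0 ->
  \sum_(k < t.+1) Qc n tau k t = (tau t != tau t.+1).
Proof.
move=> h0.
rewrite (eq_bigr (fun k : 'I_t.+1 => (tau t != tau t.+1) * (cst tau k t && (tau (prevn n k) != tau k)))).
  by rewrite -big_distrr /= g_one // muln1.
move=> [k /= kt] _; rewrite /Qc.
case C: (cst tau k t) => /=; last by rewrite muln0.
rewrite (cst_end _ C); last lia.
by rewrite [tau k == _]eq_sym; case: (_ != _); case: (_ != _).
Qed.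

Lemma sum_eqT (v M : nat) : \sum_(T < M.+1) (v == T :> nat) = (v <= M).
Proof.
elim: M => [|M IH]; first by rewrite big_ord_recr big_ord0 /=; case: v.
rewrite big_ord_recr /= IH; case: (ltngtP v M.+1) => h; lia.
Qed.

Lemma inner_sum n k T (F : nat -> nat) : T < n ->
  \sum_(l < n) (k + l == T) * F (k + l) = (k <= T) * F T.
Proof.
move=> Tn.
rewrite (eq_bigr (fun l : 'I_n => if (l == T - k :> nat) then (k <= T) * F T else 0)).
  by rewrite -big_mkcond (big_ord1_eq _ (fun _ => (k <= T) * F T)); have -> : T - k < n by lia.
move=> [l /= ln] _; case: (boolP (l == T - k)) => [/eqP ->|h].
  case: (leqP k T) => h; first by rewrite subnKC // eqxx.
  by have -> : (k + (T - k) == T) = false by lia.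
by have -> : (k + l == T) = false by lia.
Qed.

Lemma count_pairs n m tau : m.+1 < n -> tau n.-1 != tau 0 ->
  \sum_(k < n) \sum_(l < n) ((k + l <= m) && Qc n tau k (k + l))
  = \sum_(t < m.+1) (tau t != tau t.+1).
Proof.
move=> mn h0.
rewrite (eq_bigr (fun k : 'I_n => \sum_(l < n) \sum_(T < m.+1) (k + l == T) * Qc n tau k (k + l))); last first.
  move=> k _; apply: eq_bigr => l _.
  by rewrite -big_distrl /= sum_eqT; case: (_ <= _); case: (Qc _ _ _ _).
rewrite (eq_bigr (fun k : 'I_n => \sum_(T < m.+1) \sum_(l < n) (k + l == T) * Qc n tau k (k + l))); last first.
  by move=> k _; rewrite exchange_big.
rewrite exchange_big; apply: eq_bigr => [[T /= Tm]] _.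
rewrite (eq_bigr (fun k : 'I_n => (k <= T) * Qc n tau k T)); last first.
  by move=> k _; rewrite (inner_sum k (fun u => Qc n tau k u)) //; lia.
rewrite -(G_one T h0) (big_ord_widen n (fun k => nat_of_bool (Qc n tau k T))); last lia.
by rewrite [RHS]big_mkcond; apply: eq_bigr => k _; rewrite ltnS; case: (_ <= _); rewrite ?mul1n ?mul0n.
Qed.

Lemma parity_changes (tau : nat -> bool) M :
  odd (\sum_(t < M.+1) (tau t != tau t.+1)) = (tau 0 != tau M.+1).
Proof.
elim: M => [|M IH]; first by rewrite big_ord_recr big_ord0 /=; case: (_ != _).
rewrite big_ord_recr /= oddD IH.
by case: (tau 0); case: (tau M.+1); case: (tau M.+2).
Qed.


Lemma rot_sum n a (F : nat -> nat) : 0 < n -> a < n ->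
  \sum_(b < n) F b = \sum_(t < n) F ((a + t) %% n).
Proof.
move=> n0 an.
pose h := fun t : 'I_n => Ordinal (ltn_pmod (a + t) n0).
rewrite (reindex_inj (h := h)) //.
move=> [i ilt] [j jlt] /(congr1 val) /= e; apply: val_inj => /=.
move: e; elim_mod n; lia.
Qed.

Lemma M4 n x c : 0 < n -> x < n -> c < n -> c = (x + (c + (n - x)) %% n) %% n.
Proof. move=> n0 xn cn; elim_mod n; lia. Qed.

Lemma M1 n x y' t : 0 < n -> x < n -> y' < n -> t < n ->
  in_cint n x y' ((x + t) %% n) = (t <= (y' + (n - x)) %% n).
Proof. move=> n0 xn yn tn; rewrite /in_cint ltn_pmod //=; elim_mod n; lia. Qed.

Lemma M2 n x k l t : 0 < n -> x < n -> k < n -> l < n -> t < n ->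
  in_cint n ((x + k) %% n) (((x + k) %% n + l) %% n) ((x + t) %% n)
  = ((t + (n - k)) %% n <= l).
Proof. move=> n0 xn kn ln tn; rewrite /in_cint ltn_pmod //=; elim_mod n; lia. Qed.

Lemma M5 n x k : 1 < n -> x < n -> k < n ->
  csub n ((x + k) %% n) 1 = (x + prevn n k) %% n.
Proof.
move=> n1 xn kn; rewrite /csub (modn_small n1) /prevn.
case: k kn => [|k] kn; rewrite -?subn1; elim_mod n; lia.
Qed.

Lemma M6 n x k l : 0 < n -> x < n -> k < n -> l < n ->
  cadd n (((x + k) %% n + l) %% n) 1 = (x + (k + l).+1) %% n.
Proof. move=> n0 xn kn ln; rewrite /cadd; elim_mod n; lia. Qed.

Lemma M7 n k l m : k < n -> l < n -> m.+1 < n ->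
  (forall t, t < n -> (t + (n - k)) %% n <= l -> t <= m) <-> k + l <= m.
Proof.
move=> kn ln mn; split => [H|hkl t tn].
  case: (leqP (k + l) m) => // hlt; exfalso.
  case: (ltnP (k + l) n) => h2.
    have := H (k + l) h2; have -> : (k + l + (n - k)) %% n = l.
      have -> : k + l + (n - k) = n + l by lia.
      by rewrite modnDl modn_small.
    move/(_ (leqnn l)); lia.
  have := H n.-1 ltac:(lia).
  have -> : (n.-1 + (n - k)) %% n = n.-1 - k.
    have -> : n.-1 + (n - k) = n + (n.-1 - k) by lia.
    by rewrite modnDl modn_small //; lia.
  move/(_ ltac:(lia)); lia.
elim_mod n; lia.
Qed.

Lemma in_iota0 n c : (c \in iota 0 n) = (c < n).
Proof. by rewrite mem_iota. Qed.

Lemma transl n (s : nat -> bool) x y' k l : 1 < n -> x < n -> y' < n -> k < n -> l < n ->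
  ((y' + (n - x)) %% n).+1 < n ->
  (is_block n s ((x + k) %% n) (((x + k) %% n + l) %% n)
     && cint_sub n ((x + k) %% n) (((x + k) %% n + l) %% n) x y')
  = ((k + l <= (y' + (n - x)) %% n) && Qc n (fun t => s ((x + t) %% n)) k (k + l)).
Proof.
move=> n1 xn yn kn ln mn.
have n0 : 0 < n by lia.
have csE : cint_sub n ((x + k) %% n) (((x + k) %% n + l) %% n) x y'
           = (k + l <= (y' + (n - x)) %% n).
  apply/idP/idP.
    move/allP => H; apply/(M7 kn ln mn) => t tn ht.
    have := H ((x + t) %% n); rewrite in_iota0 ltn_pmod // => /(_ isT) /implyP.
    by rewrite M2 // M1 //; apply.
  move=> hkl; apply/allP => c; rewrite in_iota0 => cn.
  rewrite (M4 n0 xn cn) M2 ?M1 ?ltn_pmod //; apply/implyP.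
  by move: (ltn_pmod (c + (n - x)) n0); have [H _] := M7 kn ln mn; move: H => _ tn; apply: (proj2 (M7 kn ln mn)).
rewrite csE; case: (leqP (k + l) _) => hkl; last by rewrite andbF.
rewrite andbT /=.
set tau := fun t => s ((x + t) %% n).
have allE : forall g, all (fun c => in_cint n ((x + k) %% n) (((x + k) %% n + l) %% n) c ==> (s c == g)) (iota 0 n)
    = cst tau k (k + l) && (tau k == g).
  move=> g; apply/idP/idP.
    move/allP => H.
    have Ht : forall t, k <= t <= k + l -> tau t == g.
      move=> t /andP[h1 h2].
      have := H ((x + t) %% n); rewrite in_iota0 ltn_pmod // => /(_ isT) /implyP; apply.
      rewrite M2 //; last lia.
      have -> : t + (n - k) = n + (t - k) by lia.
      by rewrite modnDl modn_small //; lia.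
    apply/andP; split; last by apply: Ht; rewrite leqnn /=; lia.
    apply/allP => u; rewrite mem_iota => /andP[h1 h2].
    by rewrite (eqP (Ht u _)) ?(eqP (Ht k _)) // ?leqnn /=; lia.
  case/andP => /allP Hc /eqP Hk; apply/allP => c; rewrite in_iota0 => cn.
  rewrite (M4 n0 xn cn) M2 ?ltn_pmod //; apply/implyP.
  move: (ltn_pmod (c + (n - x)) n0); set t := (c + (n - x)) %% n => tn ht.
  have htk : k <= t <= k + l by move: ht; elim_mod n; lia.
  rewrite -Hk; apply: (Hc t); rewrite mem_iota; lia.
rewrite /is_block /is_block_of !ltn_pmod // !allE /= M5 // M6 // /Qc.
rewrite -/(tau (prevn n k)) -/(tau (k + l).+1).
case: (cst _ _ _) => //=.
by case: (tau k); case: (tau (prevn n k)); case: (tau (k + l).+1).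
Qed.

Lemma partC n (s : nat -> bool) x y' (be : bool) : 0 < n -> x < n -> y' < n ->
  s (csub n x 1) = ~~ be -> s x = be -> s y' = be -> s (cadd n y' 1) = ~~ be ->
  odd (block_interval_card n s x y').
Proof.
move=> n0 xn yn h1 h2 h3 h4.
have n1 : 1 < n.
  case: (ltnP 1 n) => // hn; have en : n = 1 by lia.
  have x0 : x = 0 by lia.
  move: h1 h2; rewrite /csub en !modn1 x0 => ->; by case: (be).
set m := (y' + (n - x)) %% n.
have mn : m.+1 < n.
  have : m < n by rewrite ltn_pmod.
  case: (ltngtP m.+1 n) => // hm _; exfalso.
  have : cadd n y' 1 = x by rewrite /cadd; move: hm; rewrite /m; elim_mod n; lia.
  by move=> e; move: h4; rewrite e h2; case: (be).
have e0 : (x + 0) %% n = x by rewrite addn0 modn_small.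
have em : (x + m.+1) %% n = cadd n y' 1 by rewrite /cadd /m; elim_mod n; lia.
have ep : (x + n.-1) %% n = csub n x 1 by rewrite /csub (modn_small n1) /m; rewrite -subn1; elim_mod n; lia.
rewrite /block_interval_card.
rewrite (rot_sum (fun a => \sum_(b < n) (is_block n s a b && cint_sub n a b x y')) n0 xn).
rewrite (eq_bigr (fun k : 'I_n => \sum_(l < n) ((k + l <= m) && Qc n (fun t => s ((x + t) %% n)) k (k + l)))); last first.
  move=> [k kn] _ /=.
  rewrite (rot_sum (fun b => is_block n s ((x + k) %% n) b && cint_sub n ((x + k) %% n) b x y') n0 (ltn_pmod (x + k) n0)).
  by apply: eq_bigr => [[l ln]] _ /=; rewrite transl.
rewrite count_pairs //; last by rewrite /= ep e0 h1 h2; case: (be).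
rewrite (parity_changes (fun t => s ((x + t) %% n))) /= e0 em h2 h4; by case: (be).
Qed.


Lemma L2a n r q : 0 < n -> q < n ->
  csub n (cadd n q 1) r = cadd n (csub n q r) 1.
Proof.
move=> n0 qn; rewrite /csub /cadd.
have : r %% n < n by rewrite ltn_mod.
generalize (r %% n) => s sn; elim_mod n; lia.
Qed.

Lemma L2b n r q : 0 < n -> q < n ->
  cadd n (cadd n q 1) r = cadd n (cadd n q r) 1.
Proof.
move=> n0 qn; rewrite /cadd -!(modnDmr _ r).
have : r %% n < n by rewrite ltn_mod.
generalize (r %% n) => s sn; elim_mod n; lia.
Qed.

Lemma count_pt (s : seq nat) (a b c d : pred nat) :
  (forall x, x \in s -> a x + b x = c x + d x) ->
  count a s + count b s = count c s + count d s.
Proof.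
elim: s => [|y s IH] H //=.
have := H y (mem_head _ _).
have := IH (fun x hx => H x (@mem_behead _ (y :: s) x hx)); lia.
Qed.

Lemma count_eq1 n A (f : nat -> bool) : A < n ->
  count (fun c => (c == A) && f c) (iota 0 n) = f A.
Proof.
move=> An.
have -> : count (fun c => (c == A) && f c) (iota 0 n) = count (fun c => (c == A) && f A) (iota 0 n).
  by apply: (@eq_count nat) => c /=; case: eqP => // ->.
case: (f A).
  have -> : count (fun c => (c == A) && true) (iota 0 n) = count (pred1 A) (iota 0 n).
    by apply: (@eq_count nat) => c /=; rewrite andbT.
  by rewrite count_uniq_mem ?iota_uniq // mem_iota add0n An.
have -> : count (fun c => (c == A) && false) (iota 0 n) = count pred0 (iota 0 n).
  by apply: (@eq_count nat) => c /=; rewrite andbF.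
by rewrite count_pred0.
Qed.

Definition Wn n r p := [seq c <- iota 0 n | in_cint n (csub n p r) (cadd n p r) c].

Lemma csub_lt n a k : 0 < n -> csub n a k < n.
Proof. by move=> n0; rewrite /csub ltn_pmod. Qed.
Lemma cadd_lt n a k : 0 < n -> cadd n a k < n.
Proof. by move=> n0; rewrite /cadd ltn_pmod. Qed.

Lemma L3 n r q (f : nat -> bool) : 0 < n -> q < n ->
  count f (Wn n r (cadd n q 1)) + f (csub n q r)
  = count f (Wn n r q) + f (cadd n (cadd n q r) 1).
Proof.
move=> n0 qn; rewrite /Wn !count_filter L2a // L2b //.
have An := csub_lt q r n0; have Bn := cadd_lt q r n0.
move: An Bn; set A := csub n q r; set B := cadd n q r => An Bn.
rewrite -(count_eq1 f An) -(count_eq1 f (cadd_lt B 1 n0)).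
apply: count_pt => c; rewrite mem_iota => /andP[_ cn] /=.
have := win_shift0 n0 An Bn cn.
by case: (f c); rewrite ?andbT ?andbF //= => _; rewrite ?addn0.
Qed.

Lemma maj_eq n r s p :
  maj n r s p = ~~ (count s (Wn n r p) < count (fun c => ~~ s c) (Wn n r p)).
Proof. by rewrite /maj /Wn; case: ifP. Qed.

Lemma L4a n r s q (be : bool) : 0 < n -> q < n ->
  maj n r s q = be -> maj n r s (cadd n q 1) = ~~ be -> s (csub n q r) = be.
Proof.
move=> n0 qn; rewrite !maj_eq.
have e1 := L3 r s n0 qn; have e2 := L3 r (fun c => ~~ s c) n0 qn.
move: e1 e2 => /=.
case: (s (csub n q r)); case: (s (cadd n (cadd n q r) 1)); case: (be) => /=; lia.
Qed.

Lemma L4b n r s q (be : bool) : 0 < n -> q < n ->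
  maj n r s q = ~~ be -> maj n r s (cadd n q 1) = be -> s (cadd n (cadd n q r) 1) = be.
Proof.
move=> n0 qn; rewrite !maj_eq.
have e1 := L3 r s n0 qn; have e2 := L3 r (fun c => ~~ s c) n0 qn.
move: e1 e2 => /=.
case: (s (csub n q r)); case: (s (cadd n (cadd n q r) 1)); case: (be) => /=; lia.
Qed.


Lemma in_cint_ends n a b : 0 < n -> a < n -> b < n -> in_cint n a b a && in_cint n a b b.
Proof. move=> n0 an bn; rewrite /in_cint an bn /=; elim_mod n; lia. Qed.

Lemma block_props n (s : nat -> bool) a b c : 0 < n ->
  is_block n s a b -> in_cint n a b c ->
  [/\ a < n, b < n, s a = s c, s b = s c & (s (csub n a 1) = ~~ s c /\ s (cadd n b 1) = ~~ s c)].
Proof.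
move=> n0 hb hc.
have cn : c < n by case/andP: hc.
have main : forall g, is_block_of n g s a b ->
   [/\ a < n, b < n, s a = s c, s b = s c & (s (csub n a 1) = ~~ s c /\ s (cadd n b 1) = ~~ s c)].
  move=> g /and5P[an bn /allP Hall /eqP h1 /eqP h2].
  have Hg : forall d, d < n -> in_cint n a b d -> s d = g.
    by move=> d dn hd; have := Hall d; rewrite mem_iota /= dn hd => /(_ isT) /eqP.
  case/andP: (in_cint_ends n0 an bn) => ha hb'.
  by rewrite (Hg c) // (Hg a) // (Hg b) // h1 h2.
by case/orP: hb => /main.
Qed.

Lemma cadd_csub1 n i : 0 < n -> i < n -> cadd n (csub n i 1) 1 = i.
Proof.
move=> n0 i0; rewrite /cadd /csub.
case: (ltnP 1 n) => h.
  rewrite (modn_small h); elim_mod n; lia.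
have en : n = 1 by lia.
by rewrite en !modn1; lia.
Qed.

Lemma block_lt n (s : nat -> bool) a b : is_block n s a b -> a < n /\ b < n.
Proof. by case/orP => /and5P[]. Qed.

Theorem claim8 (r n : nat) (sigma sigma' : nat -> bool) :
  1 <= r -> 0 < n ->
  (forall c, c < n -> maj n r sigma c = sigma' c) ->
  forall i j, is_block n sigma' i j ->
  forall x y x' y',
    is_left_image n r sigma i j x y ->
    is_right_image n r sigma i j x' y' ->
    odd (block_interval_card n sigma x y').
Proof.
move=> r1 n0 Hmaj i j Hb x y x' y' /andP[HL1 HL2] /andP[HR1 HR2].
have [iN jN] := block_lt Hb.
have [_ _ _ hj [hi1 hj1]] := block_props n0 Hb (proj1 (andP (in_cint_ends n0 iN jN))).
set be := sigma' i in hj hi1 hj1.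
have A1 : sigma (csub n j r) = be.
  apply: (@L4a n r sigma j be n0 jN); first by rewrite Hmaj.
  by rewrite Hmaj ?cadd_lt.
have A2 : sigma (cadd n i r) = be.
  have qn := csub_lt i 1 n0.
  rewrite -(cadd_csub1 n0 iN) L2b //.
  apply: (@L4b n r sigma _ be n0 qn); first by rewrite Hmaj.
  by rewrite cadd_csub1 // Hmaj.
have [xn _ hx _ [hx1 _]] := block_props n0 HL1 HL2.
have [_ yn _ hy [_ hy1]] := block_props n0 HR1 HR2.
rewrite A1 in hx hx1; rewrite A2 in hy hy1.
exact: (partC n0 xn yn hx1 hx hy hy1).
Qed.
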